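(* Let $l,t$ be integers with $2\leq l\leq t$. If $s$ is sufficiently large (in terms of $l,t$), then for all integers $n\geq 2s+1$ and $x$ with $l\leq x\leq s$, $$ex(n,\{K_{l,t},M_{s+1}\},x)\leq (l-1)n+(t-1)\binom{s}{l}-\left\lceil\frac{s(l-1)}{2}\right\rceil.$$
   Context: All graphs are finite and simple. $K_{l,t}$ is the complete bipartite graph with parts of sizes $l,t$; $M_{s+1}$ is the matching of $s+1$ disjoint edges. For a graph $G$ with matching number at most $s$, say $X\subseteq V(G)$ is admissible if $|X|+\sum_{i=1}^m\lfloor |V(C_i)|/2\rfloor\leq s$, where $C_1,\dots,C_m$ are the components of $G-X$; let $x(G)$ be the maximum size of an admissible set. Let $\mathscr{G}_x$ be the set of graphs on $n$ vertices containing neither $K_{l,t}$ nor $M_{s+1}$ as a subgraph and with $x(G)=x$, and $ex(n,\{K_{l,t},M_{s+1}\},x)=\max_{G\in\mathscr{G}_x}e(G)$. *)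

(* Defs.v *)
(* A simple graph on n vertices is a symmetric irreflexive
   relation e : rel 'I_n. *)
From mathcomp Require Import all_boot.
Set Implicit Arguments. Unset Strict Implicit. Unset Printing Implicit Defensive.

Section Graphs.
Variable n : nat.
Variable e : rel 'I_n.

Definition num_edges : nat :=
  #|[set p : 'I_n * 'I_n | (p.1 < p.2) && e p.1 p.2]|.

Definition contains_Klt (l t : nat) : Prop :=
  exists A B : {set 'I_n},
    [/\ #|A| = l, #|B| = t, [disjoint A & B] &
        forall a b, a \in A -> b \in B -> e a b].

Definition is_matching (M : {set 'I_n * 'I_n}) : Prop :=
  (forall p, p \in M -> (p.1 < p.2) && e p.1 p.2) /\
  (forall p q, p \in M -> q \in M -> p != q ->
     [disjoint [set p.1; p.2] & [set q.1; q.2]]).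

Definition contains_matching (k : nat) : Prop :=
  exists M, is_matching M /\ #|M| = k.

Definition del_rel (X : {set 'I_n}) : rel 'I_n :=
  fun u v => [&& e u v, u \notin X & v \notin X].

Definition comp_of (X : {set 'I_n}) (v : 'I_n) : {set 'I_n} :=
  [set u | connect (del_rel X) v u].

Definition components (X : {set 'I_n}) : {set {set 'I_n}} :=
  [set comp_of X v | v in ~: X].

Definition admissible (s : nat) (X : {set 'I_n}) : bool :=
  #|X| + \sum_(C in components X) (#|C| %/ 2) <= s.

Definition xG (s : nat) : nat :=
  \max_(X : {set 'I_n} | admissible s X) #|X|.

End Graphs.

(* Main.v *)
Require Import Defs.
From mathcomp Require Import all_boot zify.
Set Implicit Arguments. Unset Strict Implicit. Unset Printing Implicit Defensive.

Lemma bin_lin d l : 1 <= l -> d <= (l - 1) + 'C(d, l).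
Proof.
move=> l1; case: (ltnP d l) => [dl|]; first lia.
elim: d => [|d IH]; first lia.
rewrite leq_eqVlt => /orP[/eqP <-|]; first by rewrite binn; lia.
rewrite ltnS => ld; have := IH ld.
case: l l1 ld {IH} => // l' _ ld; rewrite binS.
have : 0 < 'C(d, l') by rewrite bin_gt0; lia.
lia.
Qed.

Lemma bin_thr d D : (D - 1) * d <= (D - 1) * D + 2 * 'C(d, 2).
Proof.
rewrite bin2; have := odd_double_half (d * d.-1).
have : ~~ odd (d * d.-1) by case: d => // d; rewrite /= oddM /=; case: (odd d).
move=> /negbTE -> /=; rewrite add0n -mul2n => ->.
case: (leqP d D) => h; first by nia.
case: d h => [|d] h //=; nia.
Qed.

Lemma bin_low j m : 2 <= m -> m <= j -> 'C(j - m + 2, 2) <= 'C(j, m).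
Proof.
move=> m2; elim: m m2 j => [//|m IH] m2 j.
case: (ltnP m 2) => hm.
  have -> : m = 1 by lia.
  by move=> h; rewrite subnK.
case: j => [|j] mj //; rewrite binS subSS.
exact: leq_trans (IH hm j mj) (leq_addl _ _).
Qed.

Lemma bin3 m : 'C(m.+2, 3) * 6 = m.+2 * m.+1 * m.
Proof.
have := bin_ffact m.+2 3. rewrite !ffactnS ffactn0 /= => ->.
by rewrite muln1 mulnA.
Qed.

Lemma poly3' a k l : 203 + 3 * l <= a + 2 + k ->
  54 * (k * k) + 6 * (l * k) + 2 * ((a+2) * (a+1) * a) <= 2 * ((a + k + 2) * (a + k + 1) * (a + k)).
Proof.
move=> h.
have h1 : 54 * k + 6 * l <= 3*(a*a) + 3*(a*k) + k*k + 3*a + 2 by nia.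
nia.
Qed.
Lemma poly3 a k l : 203 + 3 * l <= a + 2 + k ->
  54 * (k * k) + 6 * (l * k) + 2 * (a.+2 * a.+1 * a) <= 2 * ((a + k).+2 * (a + k).+1 * (a + k)).
Proof. by move=> h; have := poly3' h; rewrite !addn2 !addn1. Qed.

Lemma bin2x2 m : 2 * 'C(m, 2) = m * (m - 1).
Proof.
rewrite bin2; have := odd_double_half (m * m.-1).
have : ~~ odd (m * m.-1) by case: m => // m; rewrite /= oddM /=; case: (odd m).
move=> /negbTE -> /=; rewrite add0n -mul2n => ->; lia.
Qed.

Lemma binB x k l : 3 <= l -> l <= x ->
  'C(x, l) + 'C(x - l + 3 + k, 3) <= 'C(x + k, l) + 'C(x - l + 3, 3).
Proof.
move=> l3 lx; elim: k => [|k IH]; first by rewrite !addn0.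
case: l l3 lx IH => // l' l3 lx IH.
have -> : 'C(x + k.+1, l'.+1) = 'C(x+k, l'.+1) + 'C(x+k, l') by rewrite addnS binS.
have -> : 'C(x - l'.+1 + 3 + k.+1, 3) = 'C(x - l'.+1 + 3 + k, 3) + 'C(x - l'.+1 + 3 + k, 2) by rewrite addnS binS.
have := @bin_low (x + k) l' (ltac:(lia)) (ltac:(lia)).
have -> : x + k - l' + 2 = x - l'.+1 + 3 + k by lia.
lia.
Qed.

Lemma key l t s x z W : 2 <= l -> l <= t -> 200 + 4 * l <= s -> l <= x -> x <= s ->
  z <= 3 * (s - x) -> W <= z * z ->
  (l = 2 -> 39 * W <= 1560 * z + 2 * (t - 1) * 'C(z, 2)) ->
  W + (l - 1) * (s - x) + 2 * (t - 1) * 'C(x, l) <= 2 * (t - 1) * 'C(s, l).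
Proof.
move=> l2 lt hs lx xs hz hW h2.
set k := s - x. have -> : s = x + k by rewrite /k; lia.
case: (ltnP l 3) => l3.
  have El : l = 2 by lia.
  move: (h2 El); rewrite El => h.
  have e1 := bin2x2 (x + k); have e2 := bin2x2 x; have e3 := bin2x2 z.
  set T := t - 1 in h *. have T1 : 1 <= T by rewrite /T; lia.
  have {}h : 39 * W <= 1560 * z + T * (z * (z - 1)) by rewrite -e3; lia.
  suff G : W + k + T * (x * (x - 1)) <= T * ((x + k) * (x + k - 1)).
    by move: G; rewrite -e1 -e2 !mulnA [T * 2]mulnC subSS subn0 mul1n.
  have hk : z <= 3 * k by [].
  have A1 : 4719 + 9 * k <= 39 * (2 * x + k - 1) by lia.
  have H1 : 4719 + 9 * T * k <= 39 * T * (2 * x + k - 1).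
    have := leq_mul (leqnn T) A1; rewrite mulnDr.
    have : 4719 <= T * 4719 by rewrite leq_pmull.
    rewrite !mulnA [T * 39]mulnC; lia.
  have H2 : z * (z - 1) <= 9 * (k * k).
    have := leq_mul hk hk; have := leq_mul (leqnn z) (leq_subr 1 z); lia.
  have H3 : 39 * W <= 4680 * k + T * 9 * (k * k).
    have := leq_mul (leqnn T) H2; rewrite !mulnA; lia.
  have H4 : 39 * W + 39 * k <= 39 * (T * (k * (2 * x + k - 1))).
    have := leq_mul (leqnn k) H1; rewrite !mulnDr !mulnA.
    rewrite [k * 39]mulnC [k * 9]mulnC [_ * T * k]mulnAC [_ * T * k]mulnAC [39 * k * T]mulnAC.
    lia.
  clearbody k; clear hz e1 e2 hs; have [x' Ex] : exists x', x = x'.+1 by exists x.-1; lia.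
  subst x.
  have H5 : (x'.+1 + k) * (x'.+1 + k - 1) = x'.+1 * x' + k * (2 * x'.+1 + k - 1).
    rewrite addSn subSS !subn0; nia.
  rewrite H5 mulnDr; move: H4; rewrite subSS subn0 !mulnA; lia.
have hB := binB k l3 lx.
set y := x - l + 3 in hB.
have y3 : 3 <= y by rewrite /y; lia.
have hW2 : W <= 9 * (k * k) by nia.
have [a Ea] : exists a, y = a.+2 by exists (y - 2); lia.
have hp := @poly3 a k l (ltac:(move: Ea; rewrite /y /k; lia)).
have e1 := bin3 a. have e2 := bin3 (a + k).
have hh : 54 * (k * k) + 6 * (l * k) + 12 * 'C(a.+2, 3) <= 12 * 'C((a + k).+2, 3) by lia.
have lk : (l - 1) * k <= l * k by rewrite leq_mul2r leq_subr orbT.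
rewrite Ea !addSn in hB.
have hc : W + (l - 1) * k + 2 * 'C(x, l) <= 2 * 'C(x + k, l) by lia.
have [T ET] : exists T, t - 1 = T.+1 by exists (t - 2); lia.
rewrite ET.
have cd : 'C(x, l) <= 'C(x + k, l) by lia.
have := leq_mul (leqnn (2 * T)) cd.
rewrite mulnS !mulnDl; lia.
Qed.

Section G.
Variable n : nat.
Variable e : rel 'I_n.
Hypothesis esym : symmetric e.
Hypothesis eirr : irreflexive e.

Definition Nb (Y : {set 'I_n}) u := [set v in Y | e u v].
Definition deg Y u := #|Nb Y u|.

Lemma Kcount l t (Y : {set 'I_n}) : ~ contains_Klt e l t -> 0 < t ->
  \sum_u 'C(deg Y u, l) <= (t-1) * 'C(#|Y|, l).
Proof.
move=> nK t0.
have E1 u : 'C(deg Y u, l) = \sum_(A : {set 'I_n}) ((A \subset Nb Y u) && (#|A| == l)).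
  rewrite /deg -cards_draws -sum1_card big_mkcond /=.
  by apply: eq_bigr => A _; rewrite inE; case: (_ && _).
rewrite (eq_bigr _ (fun u _ => E1 u)) exchange_big /=.
rewrite -cards_draws -sum1_card big_distrr /= [X in _ <= X]big_mkcond /=.
apply: leq_sum => A _; rewrite inE muln1.
case HA: (A \subset Y); last first.
  rewrite big1 // => u _; case HS: (A \subset Nb Y u) => //=.
  exfalso; move: HA; rewrite (subset_trans HS) //.
  by apply/subsetP => v; rewrite inE => /andP[].
case Hl: (#|A| == l); last by rewrite big1 // => u _; rewrite andbF.
rewrite /=.
set S := [set u | A \subset Nb Y u].
have -> : \sum_u ((A \subset Nb Y u) && true) = #|S|.
  rewrite -sum1_card [X in _ = X]big_mkcond /=; apply: eq_bigr => u _.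
  by rewrite inE andbT; case: (_ \subset _).
rewrite leqNgt; apply/negP => HS.
have : 0 < #|[set B : {set 'I_n} | B \subset S & #|B| == t]|.
  by rewrite cards_draws bin_gt0; case: (t) t0 HS => // t1 _; rewrite subSS subn0.
case/card_gt0P => B; rewrite inE => /andP[BS /eqP Bt].
apply: nK; exists A, B; split => //; first exact/eqP.
- rewrite -setI_eq0; apply/eqP/setP => a; rewrite !inE.
  apply/negP => /andP[aA aB].
  move/subsetP: BS => /(_ a aB); rewrite inE => /subsetP /(_ a aA).
  by rewrite inE eirr andbF.
- move=> a b aA bB.
  move/subsetP: BS => /(_ b bB); rewrite inE => /subsetP /(_ a aA).
  by rewrite inE esym => /andP[].
Qed.

Lemma degE B u : deg B u = \sum_v ((v \in B) && e u v).
Proof.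
rewrite /deg -sum1_card [LHS]big_mkcond /=; apply: eq_bigr => v _.
by rewrite inE; case: (_ && _).
Qed.

Lemma sum_sym (A B : {set 'I_n}) :
  \sum_(u in A) deg B u = \sum_(v in B) deg A v.
Proof.
rewrite (eq_bigr _ (fun u _ => degE B u)) (eq_bigr _ (fun u _ => degE A u)).
rewrite big_mkcond [RHS]big_mkcond /=.
rewrite (eq_bigr (fun u => \sum_v ((u \in A) && (v \in B) && e u v))); last first.
  move=> u _; case: (u \in A) => /=; last by rewrite big1.
  by apply: eq_bigr.
rewrite [RHS](eq_bigr (fun v => \sum_u ((u \in A) && (v \in B) && e u v))); last first.
  move=> v _; case: (v \in B) => /=; last by rewrite big1 // => u _; rewrite andbF.
  by apply: eq_bigr => u _; rewrite andbT esym.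
by rewrite exchange_big.
Qed.

Lemma handshake : 2 * num_edges e = \sum_u deg setT u.
Proof.
rewrite (eq_bigr _ (fun u _ => degE setT u)).
have -> : num_edges e = \sum_u \sum_v ((val u < val v) && e u v).
  rewrite /num_edges -sum1_card pair_bigA /= big_mkcond /=.
  by apply: eq_bigr => p _; rewrite inE; case: (_ && _).
rewrite mul2n -addnn.
have -> : \sum_u \sum_v ((v \in setT) && e u v) =
  \sum_u \sum_v (((val u < val v) && e u v) + ((val v < val u) && e v u)).
  apply: eq_bigr => u _; apply: eq_bigr => v _; rewrite in_setT /= (esym v u).
  case: (ltngtP u v) => h //=; rewrite ?addn0 //.
  by rewrite (val_inj h) eirr.
under [RHS]eq_bigr => u _ do rewrite big_split.
rewrite big_split /=; congr (_ + _).
by rewrite exchange_big.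
Qed.


Definition Zs (X : {set 'I_n}) := [set u | [exists v, del_rel e X u v]].

Lemma card_bigcup_le (P : pred {set 'I_n}) :
  #|\bigcup_(C | P C) C| <= \sum_(C | P C) #|C|.
Proof.
apply: (big_ind2 (fun (U : {set 'I_n}) m => #|U| <= m)) => //.
- by rewrite cards0.
- move=> U1 m1 U2 m2 h1 h2; apply: leq_trans (leq_card_setU _ _) _; lia.
Qed.

Lemma Zcard X : #|Zs X| <= 3 * \sum_(C in components e X) (#|C| %/ 2).
Proof.
have sub : Zs X \subset \bigcup_(C | (C \in components e X) && (1 < #|C|)) C.
  apply/subsetP => u; rewrite inE => /existsP [v /and3P [euv uX vX]].
  apply/bigcupP; exists (comp_of e X u).
    apply/andP; split; first by apply/imsetP; exists u; rewrite ?inE.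
    have : [set u; v] \subset comp_of e X u.
      apply/subsetP => w; rewrite !inE => /orP [/eqP ->|/eqP ->]; first exact: connect0.
      by apply: connect1; rewrite /del_rel euv uX vX.
    move/subset_leq_card; rewrite cards2.
    have -> : u != v by apply/eqP => h; move: euv; rewrite h eirr.
    done.
  by rewrite inE connect0.
apply: leq_trans (subset_leq_card sub) _.
apply: leq_trans (card_bigcup_le _) _.
rewrite big_distrr /= [X in _ <= X](bigID (fun C : {set 'I_n} => 1 < #|C|)) /=.
apply: leq_trans (leq_addr _ _); apply: leq_sum => C /andP [_ h]; lia.
Qed.

Lemma degsplit (X : {set 'I_n}) u : deg setT u = deg X u + deg (~: X) u.
Proof.
rewrite !degE -big_split /=; apply: eq_bigr => v _.
by rewrite !inE; case: (v \in X); case: (e u v).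
Qed.

Lemma sumsplit (X : {set 'I_n}) (F : 'I_n -> nat) :
  \sum_u F u = \sum_(u in X) F u + \sum_(u in ~: X) F u.
Proof.
rewrite (bigID (fun u => u \in X)) /=; congr (_ + _).
by apply: eq_bigl => u; rewrite inE.
Qed.

Lemma nonX_le (X : {set 'I_n}) : \sum_(u in ~: X) deg (~: X) u <= \sum_(u in Zs X) deg (Zs X) u.
Proof.
rewrite big_mkcond [X in _ <= X]big_mkcond /=; apply: leq_sum => u _.
case uX: (u \in ~: X) => //.
case uZ: (u \in Zs X).
  apply: subset_leq_card; apply/subsetP => v; rewrite !inE => /andP [vX euv].
  rewrite euv andbT; apply/existsP; exists u.
  by rewrite /del_rel esym euv vX; move: uX; rewrite inE => ->.
rewrite leqn0 cards_eq0; apply/eqP/setP => v; rewrite !inE.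
apply/negP => /andP [vX euv]; have := negbT uZ; rewrite inE => /existsPn /(_ v).
by rewrite /del_rel euv vX; move: uX; rewrite inE => ->.
Qed.


Lemma edge_bound l t (X : {set 'I_n}) : 1 <= l -> 0 < t -> ~ contains_Klt e l t ->
  2 * num_edges e + (l - 1) * #|X| <=
  2 * ((l - 1) * n) + 2 * ((t - 1) * 'C(#|X|, l)) + \sum_(u in Zs X) deg (Zs X) u.
Proof.
move=> l1 t0 nK.
rewrite handshake (eq_bigr _ (fun u _ => degsplit X u)) big_split /=.
rewrite (sumsplit X (fun u => deg X u)) (sumsplit X (fun u => deg (~:X) u)).
rewrite (sum_sym X (~:X)).
have c := nonX_le X.
have kc := Kcount X nK t0.
rewrite (sumsplit X (fun u => 'C(deg X u, l))) in kc.
have hX : \sum_(u in X) deg X u <= #|X| * (l - 1) + 2 * \sum_(u in X) 'C(deg X u, l).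
  rewrite -sum_nat_const big_distrr -big_split /=; apply: leq_sum => u _.
  have := bin_lin (deg X u) l1; lia.
have hN : \sum_(u in ~: X) deg X u <= #|~: X| * (l - 1) + \sum_(u in ~: X) 'C(deg X u, l).
  rewrite -sum_nat_const -big_split /=; apply: leq_sum => u _.
  exact: bin_lin.
have hc : #|X| * (l - 1) + #|~: X| * (l - 1) = n * (l - 1).
  by rewrite -mulnDl cardsC card_ord.
rewrite [(l - 1) * n]mulnC [(l - 1) * #|X|]mulnC.
move: c kc hX hN hc.
set a := \sum_(u in X) deg X u. set b := \sum_(u in ~: X) deg X u.
set cc := \sum_(u in ~: X) deg (~: X) u. set W := \sum_(u in Zs X) deg (Zs X) u.
set Ca := \sum_(u in X) 'C(deg X u, l). set Cb := \sum_(u in ~: X) 'C(deg X u, l).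
set K := (t - 1) * 'C(#|X|, l).
set x1 := #|X| * (l - 1). set y1 := #|~: X| * (l - 1). set m := n * (l - 1).
lia.
Qed.

Lemma W_le (X : {set 'I_n}) : \sum_(u in Zs X) deg (Zs X) u <= #|Zs X| * #|Zs X|.
Proof.
rewrite -sum_nat_const; apply: leq_sum => u _; apply: subset_leq_card.
by apply/subsetP => v; rewrite inE => /andP [].
Qed.

Lemma W_le2 t (X : {set 'I_n}) : 0 < t -> ~ contains_Klt e 2 t ->
  39 * \sum_(u in Zs X) deg (Zs X) u <= 1560 * #|Zs X| + 2 * (t - 1) * 'C(#|Zs X|, 2).
Proof.
move=> t0 nK.
have kc := Kcount (Zs X) nK t0.
have h1 : \sum_(u in Zs X) 'C(deg (Zs X) u, 2) <= \sum_u 'C(deg (Zs X) u, 2).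
  rewrite [X in _ <= X](sumsplit (Zs X)); exact: leq_addr.
have h2 : 39 * \sum_(u in Zs X) deg (Zs X) u <=
   #|Zs X| * 1560 + 2 * \sum_(u in Zs X) 'C(deg (Zs X) u, 2).
  rewrite -sum_nat_const big_distrr big_distrr -big_split /=; apply: leq_sum => u _.
  exact: (bin_thr (deg (Zs X) u) 40).
rewrite -mulnA; move: kc h1 h2.
set W := \sum_(u in Zs X) deg (Zs X) u.
set A := \sum_(u in Zs X) 'C(deg (Zs X) u, 2). set B := \sum_u 'C(deg (Zs X) u, 2).
set K := (t - 1) * 'C(#|Zs X|, 2). set z := #|Zs X|.
lia.
Qed.

End G.

Unset Implicit Arguments.
Set Strict Implicit.

Theorem corollary3p5 (l t : nat) (Hl : 2 <= l) (Hlt : l <= t) :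
  exists s0 : nat, forall s : nat, s0 <= s ->
  forall n : nat, 2 * s + 1 <= n ->
  forall x : nat, l <= x -> x <= s ->
  forall e : rel 'I_n, symmetric e -> irreflexive e ->
    ~ contains_Klt e l t ->
    ~ contains_matching e s.+1 ->
    xG e s = x ->
    num_edges e + (s * (l - 1)).+1 %/ 2 <= (l - 1) * n + (t - 1) * 'C(s, l).
Proof.
exists (200 + 4 * l) => s hs n hn x lx xs e esym eirr nK _ hx.
have t0 : 0 < t by lia.
have hpos : 0 < #|[pred X : {set 'I_n} | admissible e s X]|.
  case: (posnP #|[pred X : {set 'I_n} | admissible e s X]|) => // h0.
  move: hx; rewrite /xG big_pred0; first lia.
  by move=> X; have := card0_eq h0 X; rewrite !inE.
have [X HX HmX] := eq_bigmax_cond (fun X : {set 'I_n} => #|X|) hpos.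
have Xx : #|X| = x by rewrite -hx -HmX.
move: HX; rewrite inE /admissible => HX.
have hz := Zcard eirr X.
have hW := W_le e X.
have hE := @edge_bound _ e esym eirr l t X (ltac:(lia)) t0 nK.
rewrite Xx in hE HX.
have hW2 : l = 2 -> 39 * \sum_(u in Zs e X) deg e (Zs e X) u <=
    1560 * #|Zs e X| + 2 * (t - 1) * 'C(#|Zs e X|, 2).
  move=> El; apply: (@W_le2 _ e esym eirr t X t0); by rewrite -El.
have hk := @key l t s x #|Zs e X| (\sum_(u in Zs e X) deg e (Zs e X) u) Hl Hlt hs lx xs
  (ltac:(lia)) hW hW2.
have hc : (l - 1) * x + (l - 1) * (s - x) = s * (l - 1).
  by rewrite -mulnDr subnKC // mulnC.
move: hE hk hc.
set W := \sum_(u in Zs e X) deg e (Zs e X) u.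
set K1 := 2 * (t - 1) * 'C(x, l). set K2 := 2 * (t - 1) * 'C(s, l).
have -> : 2 * ((t - 1) * 'C(x, l)) = K1 by rewrite /K1 mulnA.
have -> : (t - 1) * 'C(s, l) = K2 %/ 2 by rewrite /K2 -mulnA mulKn.
have e2 : K2 = 2 * ((t - 1) * 'C(s, l)) by rewrite /K2 mulnA.
move: e2; set K3 := (t - 1) * 'C(s, l).
set a := (l - 1) * x. set b := (l - 1) * (s - x). set c := s * (l - 1).
set d := (l - 1) * n.
lia.
Qed.
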